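(* Let $G$ be a connected undirected graph. Suppose that for every initial vector $v(0)$ with $\|v(0)\|_1\le1$ and every $t\ge1$ there is a non-negative real random variable $F(t,v(0))$, a function of the random edge sequence of length $t$, such that: (i) there exists $C>0$ such that for every $v(0)$ with $\|v(0)\|_1\le1$, every $t\ge1$ and every $w\in\mathbb R^{V(G)}$, $\mathbb E[F(t,v(0))\mid v(t-1)=w]\ge C\|w-\bar v\|_1$; and (ii) $\sum_{t=1}^k F(t,v(0))$ converges in $L^1$ (over random infinite edge sequences), as $k\to\infty$, to a random variable $F(v(0))$. Let $\mathbb E_{\max}=\max_{\|v(0)\|_1\le1}\mathbb E[F(v(0))]$. Then for every $\epsilon>0$, $$t_{\epsilon,1}(G,v(0))\le\frac{8\,\mathbb E[F(v(0))]}{\epsilon^2C}\qquad\text{and}\qquad t_{\epsilon,1}(G)\le\frac{8\,\mathbb E_{\max}}{\epsilon^2C},$$ where $t_{\epsilon,1}(G,v(0))=\min\{t\in\mathbb N:\mathbb E\|v(t)-\bar v\|_1\le\epsilon\}$.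
   Context: The averaging process on a finite, undirected, connected graph $G=(V,E)$, $V=\{1,\dots,n\}$: the state vector $v(t)\in\mathbb R^n$, $t=0,1,2,\dots$, starts from a given $v(0)$; at each step $t\ge 1$ an edge $\{i,j\}\in E$ is chosen uniformly at random (independently of all previous choices) and both $v_i$ and $v_j$ are replaced by $(v_i+v_j)/2$, all other coordinates unchanged. $\bar v=(a,\dots,a)^T$ with $a=\frac1n\sum_i v_i(0)$. $t_{\epsilon,1}(G)$ is the least $t\in\mathbb N$ such that for every $v(0)$ with $\|v(0)\|_1=1$ one has $\mathbb E\|v(t)-\bar v\|_1\le\epsilon$. *)

(* Defs.v *)
From HB Require Import structures.
From mathcomp Require Import all_boot all_order all_algebra.
From mathcomp Require Import all_classical all_reals all_analysis.
Set Implicit Arguments. Unset Strict Implicit. Unset Printing Implicit Defensive.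
Import Order.TTheory GRing.Theory Num.Theory.
Local Open Scope ring_scope.

Section Averaging.
Variables (R : realType) (n : nat) (adj : rel 'I_n).

(* The graph G on V = 'I_n is given by a symmetric irreflexive relation adj.
   An (undirected) edge {i,j} is represented by the ordered pair (i,j), i<j. *)
Definition simple_graph : Prop :=
  symmetric adj /\ irreflexive adj.
Definition connected_graph : Prop := forall i j : 'I_n, connect adj i j.

Definition edge := {e : 'I_n * 'I_n | (e.1 < e.2)%N && adj e.1 e.2}.

Definition vec := {ffun 'I_n -> R}.

Definition avg_step (e : edge) (v : vec) : vec :=
  [ffun k => if (k == (val e).1) || (k == (val e).2)
             then (v (val e).1 + v (val e).2) / 2 else v k].

(* v(t) as a function of v(0) and the edge sequence chosen in steps 1..t. *)
Definition traj (v0 : vec) (s : seq edge) : vec := foldl (fun v e => avg_step e v) v0 s.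

Definition norm1 (v : vec) : R := \sum_i `|v i|.

Definition vbar (v0 : vec) : vec := [ffun _ => (\sum_i v0 i) / n%:R].

(* Expectation of a function of the (uniform, independent) first t edges. *)
Definition Eseq (t : nat) (f : t.-tuple edge -> R) : R :=
  (\sum_(s : t.-tuple edge) f s) / (#|{: edge}|%:R ^+ t).

Definition Edist (v0 : vec) (t : nat) : R :=
  Eseq (fun s : t.-tuple edge => norm1 (traj v0 s - vbar v0)).

Definition eprefix (T : Type) (X : nat -> T -> edge) (t : nat) (w : T) : t.-tuple edge :=
  [tuple X (val i) w | i < t].

End Averaging.

(* Main.v *)
Require Import Defs.
From HB Require Import structures.
From mathcomp Require Import all_boot all_order all_algebra.
From mathcomp Require Import all_classical all_reals all_analysis.
Import Order.TTheory GRing.Theory Num.Theory.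
Local Open Scope classical_set_scope.
Local Open Scope ring_scope.
From mathcomp Require Import ring lra.

Lemma sum_tupleS (T : finType) (R : nmodType) t (phi : t.+1.-tuple T -> R) :
  \sum_(s : t.+1.-tuple T) phi s = \sum_(e : T) \sum_(s : t.-tuple T) phi [tuple of e :: s].
Proof.
rewrite pair_big /= (reindex (fun p : T * t.-tuple T => [tuple of p.1 :: p.2])) //.
exists (fun s => (thead s, [tuple of behead s])).
- by case=> e s _; rewrite /= theadE; congr pair; apply: val_inj.
- by move=> s _; rewrite /= -tuple_eta.
Qed.

Lemma sum_tuple0 (T : finType) (R : nmodType) (h : seq T -> R) :
  \sum_(s : 0.-tuple T) h s = h [::].
Proof.
rewrite (eq_bigr (fun _ => h [::])); last by move=> s _; rewrite tuple0.
by rewrite sumr_const card_tuple expn0.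
Qed.

Lemma sum_take (T : finType) (R : comPzRingType) (k t : nat) (h : seq T -> R) :
  (k <= t)%N ->
  \sum_(s : t.-tuple T) h (take k s) = (#|T|%:R ^+ (t - k)) * \sum_(s : k.-tuple T) h s.
Proof.
elim: k t h => [|k IH] t h Hk.
  rewrite sum_tuple0 subn0 (eq_bigr (fun _ => h [::])); last by move=> s _; rewrite take0.
  by rewrite sumr_const card_tuple -natrX mulr_natl.
case: t Hk => [//|t] Hk.
rewrite (@sum_tupleS _ _ _ (fun s : t.+1.-tuple T => h (take k.+1 s))) (@sum_tupleS _ _ _ (fun s : k.+1.-tuple T => h s)) subSS mulr_sumr; apply: eq_bigr => e _.
rewrite (eq_bigr (fun s : t.-tuple T => h (e :: take k s))) //.
by rewrite (IH t (fun s => h (e :: s))).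
Qed.

Section Geo.
Variables (R : realType) (n : nat) (adj : rel 'I_n).

Lemma norm1_ge0 (v : vec R n) : 0 <= norm1 v.
Proof. by apply: sumr_ge0 => i _. Qed.

Lemma vecB (v w : vec R n) i : (v - w) i = v i - w i.
Proof. by rewrite !ffunE. Qed.

Lemma split2 (f : 'I_n -> R) i j : i != j ->
  \sum_k f k = f i + f j + \sum_(k | (k != i) && (k != j)) f k.
Proof.
move=> ij; rewrite (bigD1 i) //= (bigD1 j) 1?eq_sym //= addrA.
by [].
Qed.

Lemma norm1_avg (e : edge adj) (v : vec R n) (a : R) :
  norm1 (avg_step e v - [ffun _ => a]) <= norm1 (v - [ffun _ => a]).
Proof.
case: e => [[i j] /= H]; have /andP[Hij _] := H.
have ij : i != j by rewrite neq_ltn Hij.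
rewrite /norm1 !(@split2 _ i j ij).
rewrite lerD //.
  rewrite !vecB /avg_step !ffunE /= eqxx (negbTE ij) eq_sym (negbTE ij) eqxx /=.
  have -> : (v i + v j) / 2 - a = ((v i - a) + (v j - a)) / 2 by field.
  rewrite normrM [`|2^-1|]ger0_norm ?invr_ge0 ?ler0n //.
  have := ler_normD (v i - a) (v j - a).
  set x := `|_ + _|; set y := `|_| + `|_|. move=> Hxy. lra.
apply: ler_sum => k /andP[ki kj].
by rewrite !vecB /avg_step !ffunE /= (negbTE ki) (negbTE kj).
Qed.

Lemma norm1_traj (r : seq (edge adj)) (v : vec R n) (a : R) :
  norm1 (traj v r - [ffun _ => a]) <= norm1 (v - [ffun _ => a]).
Proof.
elim: r v => [//|e r IH] v /=.
exact: le_trans (IH _) (norm1_avg e v a).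
Qed.

Lemma traj_take (v : vec R n) (s : seq (edge adj)) k :
  traj v s = traj (traj v (take k s)) (drop k s).
Proof. by rewrite /traj -foldl_cat cat_take_drop. Qed.

Lemma norm1B (v w : vec R n) : norm1 (v - w) <= norm1 v + norm1 w.
Proof.
rewrite /norm1 -big_split /=; apply: ler_sum => i _.
by rewrite vecB ler_normB.
Qed.

Lemma norm1_vbar (v : vec R n) : (0 < n)%N -> norm1 (vbar v) <= norm1 v.
Proof.
move=> Hn; rewrite /norm1 /vbar.
rewrite (eq_bigr (fun _ => `|\sum_i v i| / n%:R)); last first.
  by move=> i _; rewrite ffunE normrM [`|_^-1|]ger0_norm ?invr_ge0 ?ler0n.
rewrite sumr_const card_ord -(mulr_natr (`|\sum_i v i| / n%:R)) divfK ?pnatr_eq0 -?lt0n //.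
exact: ler_norm_sum.
Qed.

Hypothesis Epos : (0 < #|{: edge adj}|)%N.

Lemma Eseq_take (h : seq (edge adj) -> R) k t : (k <= t)%N ->
  Eseq (fun s : t.-tuple (edge adj) => h (take k s)) = Eseq (fun s : k.-tuple (edge adj) => h s).
Proof.
move=> Hk; rewrite /Eseq sum_take //.
have E0 : (#|{: edge adj}|%:R : R) != 0 by rewrite pnatr_eq0 -lt0n.
rewrite -(subnK Hk) exprD subnK //.
set E := (#|{: edge adj}|%:R : R).
set E' := (X in X ^+ (t - k) * _ / _).
have -> : E' = E by [].
field. by rewrite !expf_neq0.
Qed.

Lemma Eseq_le t (f g : t.-tuple (edge adj) -> R) : (forall s, f s <= g s) -> Eseq f <= Eseq g.
Proof.
move=> H; rewrite /Eseq ler_wpM2r ?invr_ge0 ?exprn_ge0 ?ler0n //.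
by apply: ler_sum => s _.
Qed.

Lemma Edist_mono (v0 : vec R n) t : Edist adj v0 t.+1 <= Edist adj v0 t.
Proof.
rewrite /Edist -(@Eseq_take (fun s => norm1 (traj v0 s - vbar v0)) t t.+1 (leqnSn t)).
apply: Eseq_le => s; rewrite (traj_take _ _ t).
exact: norm1_traj.
Qed.

Lemma Edist0 (v0 : vec R n) : Edist adj v0 0 = norm1 (v0 - vbar v0).
Proof.
by rewrite /Edist /Eseq (@sum_tuple0 _ _ (fun s => norm1 (traj v0 s - vbar v0))) expr0 divr1.
Qed.

End Geo.

Section Part.
Variables (R : realType) (n : nat) (adj : rel 'I_n).

Lemma EseqZ t (c : R) (f : t.-tuple (edge adj) -> R) :
  Eseq (fun s => c * f s) = c * Eseq f.
Proof. by rewrite /Eseq -mulr_sumr mulrA. Qed.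

Lemma Eseq_sum t (I : Type) (L : seq I) (f : I -> t.-tuple (edge adj) -> R) :
  \sum_(i <- L) Eseq (f i) = Eseq (fun s => \sum_(i <- L) f i s).
Proof. by rewrite /Eseq -mulr_suml exchange_big. Qed.

Lemma sum_ind (T : eqType) (L : seq T) (x : T) (g : R) :
  uniq L -> x \in L -> \sum_(w <- L) (if x == w then g else 0) = g.
Proof.
move=> uL xL; rewrite (big_rem x) //= eqxx big1_seq ?addr0 // => w /= wr.
case: eqP => // xw; subst w.
by rewrite mem_rem_uniqF in wr.
Qed.

Lemma Eseq_partition t (key : t.-tuple (edge adj) -> vec R n) (g : t.-tuple (edge adj) -> R) :
  Eseq g = \sum_(w <- undup [seq key s | s <- enum {: t.-tuple (edge adj)}])
             Eseq (fun s => if key s == w then g s else 0).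
Proof.
rewrite Eseq_sum; congr Eseq; apply: funext => s.
rewrite sum_ind ?undup_uniq // mem_undup; apply: map_f.
by rewrite mem_enum.
Qed.

Lemma stepA (Epos : (0 < #|{: edge adj}|)%N) (F : forall t : nat, vec R n -> t.-tuple (edge adj) -> R)
  (C : R) (v0 : vec R n) (t : nat)
  (Hi : forall w : vec R n,
      Eseq (fun s : t.+1.-tuple (edge adj) =>
              if traj v0 (take t s) == w then F t.+1 v0 s else 0)
      >= C * norm1 (w - vbar v0) *
         Eseq (fun s : t.+1.-tuple (edge adj) =>
              if traj v0 (take t s) == w then 1 else 0)) :
  C * Edist adj v0 t <= Eseq (F t.+1 v0).
Proof.
rewrite (@Eseq_partition t.+1 (fun s : t.+1.-tuple (edge adj) => traj v0 (take t s))).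
rewrite /Edist -(@Eseq_take R n adj Epos (fun s => norm1 (traj v0 s - vbar v0)) t t.+1 (leqnSn t)).
rewrite -EseqZ (@Eseq_partition t.+1 (fun s : t.+1.-tuple (edge adj) => traj v0 (take t s))).
apply: ler_sum => w _.
apply: le_trans (Hi w).
rewrite -EseqZ le_eqVlt; apply/orP; left; apply/eqP; congr Eseq; apply: funext => s.
by case: eqP => [->|]; rewrite ?mulr1 ?mulr0.
Qed.

End Part.

Section Meas.
Variables (R : realType) (n : nat) (adj : rel 'I_n).
Variables (d : measure_display) (Omega : measurableType d) (P : probability Omega R)
  (X : nat -> Omega -> edge adj).
Hypothesis HX_meas : forall (k : nat) (s : k.-tuple (edge adj)),
      measurable [set w | eprefix X k w = s].
Hypothesis HX_law : forall (k : nat) (s : k.-tuple (edge adj)),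
      P [set w | eprefix X k w = s] = ((#|{: edge adj}|%:R ^+ k)^-1)%:E.

Lemma prefix_decomp t (g : t.-tuple (edge adj) -> R) (w : Omega) :
  (g (eprefix X t w))%:E =
  (\sum_(s : t.-tuple (edge adj)) (g s)%:E * (\1_[set w | eprefix X t w = s] w)%:E)%E.
Proof.
rewrite (bigD1 (eprefix X t w)) //= indicE mem_set // mule1 big1 ?adde0 //.
move=> s /negPf ns; rewrite indicE memNset ?mule0 //=.
by move=> /esym /eqP; rewrite ns.
Qed.

Lemma int_prefix t (g : t.-tuple (edge adj) -> R) :
  P.-integrable setT (fun w => (g (eprefix X t w))%:E) /\
  (\int[P]_w (g (eprefix X t w))%:E = (Eseq g)%:E)%E.
Proof.
have Hint : forall s : t.-tuple (edge adj),
    P.-integrable setT (fun w => (g s)%:E * (\1_[set w | eprefix X t w = s] w)%:E)%E.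
  by move=> s; apply: integrableZl => //; apply: integrable_indic.
split.
  under eq_fun do rewrite prefix_decomp.
  by apply: integrable_sum => // s _; apply: Hint.
under eq_integral do rewrite prefix_decomp.
rewrite integral_sum //.
rewrite (eq_bigr (fun s => ((g s) * (#|{: edge adj}|%:R ^+ t)^-1)%:E)); last first.
  move=> s _; rewrite integralZl //; last exact: integrable_indic.
  by rewrite integral_indic // setIT EFinM; congr (_ * _)%E; exact: HX_law.
by rewrite sumEFin /Eseq mulr_suml.
Qed.

Lemma Eseq_ge0 t (f : t.-tuple (edge adj) -> R) : (forall s, 0 <= f s) -> 0 <= Eseq f.
Proof.
move=> H; rewrite /Eseq divr_ge0 ?exprn_ge0 ?ler0n //.
by apply: sumr_ge0 => s _.
Qed.

Lemma partial_le (F : forall t : nat, vec R n -> t.-tuple (edge adj) -> R)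
  (Finf : Omega -> R) (v0 : vec R n)
  (Hnn : forall t s, (1 <= t)%N -> 0 <= F t v0 s)
  (Hint : P.-integrable setT (fun w => (Finf w)%:E))
  (Hcvg : (fun k : nat => (\int[P]_w
          (`| \sum_(1 <= t < k.+1) F t v0 (eprefix X t w) - Finf w |)%:E)%E)
        @ \oo --> 0%E) (k : nat) :
  \sum_(1 <= t < k.+1) Eseq (F t v0) <= fine (\int[P]_w (Finf w)%:E)%E.
Proof.
pose S m w := \sum_(1 <= t < m.+1) F t v0 (eprefix X t w).
have intS m : P.-integrable setT (fun w => (S m w)%:E) /\
    (\int[P]_w (S m w)%:E = (\sum_(1 <= t < m.+1) Eseq (F t v0))%:E)%E.
  rewrite /S; split.
    under eq_fun do rewrite -sumEFin.
    by apply: integrable_sum => // t _; exact: (proj1 (int_prefix t (F t v0))).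
  under eq_integral do rewrite -sumEFin.
  rewrite integral_sum //; last by move=> t; exact: (proj1 (int_prefix t (F t v0))).
  by rewrite -sumEFin; apply: eq_bigr => t _; exact: (proj2 (int_prefix t (F t v0))).
set M := fine _.
have IM : (\int[P]_w (Finf w)%:E)%E = M%:E by rewrite fineK // integrable_fin_num.
have mono m : (k <= m)%N ->
    \sum_(1 <= t < k.+1) Eseq (F t v0) <= \sum_(1 <= t < m.+1) Eseq (F t v0).
  move=> km; rewrite [X in _ <= X](@big_cat_nat _ _ _ k.+1) //= ?ltnS //.
  rewrite lerDl big_nat_cond; apply: sumr_ge0 => t /andP[/andP[Ht _] _].
  apply: Eseq_ge0 => s; apply: Hnn.
  exact: leq_ltn_trans (leq0n k) Ht.
have key m : (k <= m)%N -> ((\sum_(1 <= t < k.+1) Eseq (F t v0) - M)%:E <=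
    \int[P]_w (`| \sum_(1 <= t < m.+1) F t v0 (eprefix X t w) - Finf w |)%:E)%E.
  move=> km.
  apply: (@le_trans _ _ ((\sum_(1 <= t < m.+1) Eseq (F t v0) - M)%:E)).
    by rewrite lee_fin lerD2r mono.
  rewrite EFinB -(proj2 (intS m)) -IM -integralB_EFin //; last exact: (proj1 (intS m)).
  apply: le_trans (lee_abs _) _.
  apply: le_trans (le_abse_integral _ _ _) _ => //.
    exact: (measurable_int _ (integrableB _ (proj1 (intS m)) Hint)).
have : ((\sum_(1 <= t < k.+1) Eseq (F t v0) - M)%:E <= 0)%E.
  rewrite -(cvg_lim (@ereal_hausdorff _) Hcvg).
  apply: lime_ge; first exact: cvgP Hcvg.
  near=> m; apply: key; near: m; exact: nbhs_infty_ge.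
by rewrite lee_fin subr_le0.
Unshelve. all: by end_near.
Qed.

End Meas.

Definition tchoice {R : realType} (eps Mx C : R) : nat :=
  if 2 <= eps then 0%N else Num.truncn (Mx / (C * eps)).

Lemma tchoice1 (R : realType) (eps Mx C : R) : 0 < C -> 0 < eps -> 0 <= Mx ->
  (tchoice eps Mx C)%:R <= 8 * Mx / (eps ^+ 2 * C).
Proof.
move=> HC He HM; rewrite /tchoice; case: ifP => He2.
  apply: divr_ge0; first by apply: mulr_ge0.
  by apply: mulr_ge0; [apply: exprn_ge0; exact: ltW | exact: ltW].
have y0 : 0 <= Mx / (C * eps) by apply: divr_ge0 => //; apply: mulr_ge0; exact: ltW.
have /andP[h1 _] := truncn_itv y0.
apply: le_trans h1 _.
have -> : 8 * Mx / (eps ^+ 2 * C) = (Mx / (C * eps)) * (8 * eps^-1).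
  by field; rewrite ?gt_eqF.
set y := Mx / (C * eps).
have ez : eps * eps^-1 = 1 by rewrite mulfV ?gt_eqF.
have z0 : 0 < eps^-1 by rewrite invr_gt0.
have e2 : eps < 2 by rewrite ltNge He2.
set z := eps^-1 in ez z0 *.
have hz : 1 <= 8 * z by nra.
have y0' : 0 <= y by [].
rewrite -{1}[y]mulr1; exact: ler_wpM2l.
Qed.

Lemma tchoice2 (R : realType) (eps Mx C : R) (D : nat -> R) : 0 < C -> 0 < eps -> 0 <= Mx ->
  (forall k, (k.+1)%:R * C * D k <= Mx) -> D 0%N <= 2 -> D (tchoice eps Mx C) <= eps.
Proof.
move=> HC He HM HD HD0; rewrite /tchoice; case: ifP => He2.
  exact: le_trans HD0 He2.
have y0 : 0 <= Mx / (C * eps) by apply: divr_ge0 => //; apply: mulr_ge0; exact: ltW.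
have /andP[_ h1] := truncn_itv y0.
set t := Num.truncn _ in h1 *.
set y := Mx / (C * eps) in y0 h1.
set a := (t.+1)%:R in h1.
have Ce : 0 < C * eps by rewrite mulr_gt0.
have hM : Mx = y * (C * eps) by rewrite /y divfK ?gt_eqF.
have h2 : y * (C * eps) <= a * (C * eps) by rewrite ler_pM2r // ltW.
have h3 : (a * C) * D t <= (a * C) * eps.
  apply: le_trans (HD t) _; rewrite hM -mulrA; exact: h2.
by rewrite ler_pM2l ?mulr_gt0 // in h3.
Qed.

Theorem proposition6
  (R : realType) (n : nat) (adj : rel 'I_n)
  (Hn : (1 < n)%N) (Hsimple : simple_graph adj) (Hconn : connected_graph adj)
  (* the random infinite edge sequence: X i is the edge chosen at step i+1;
     the X i are i.i.d. uniform on the edge set *)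
  (d : measure_display) (Omega : measurableType d) (P : probability Omega R)
  (X : nat -> Omega -> edge adj)
  (HX_meas : forall (k : nat) (s : k.-tuple (edge adj)),
      measurable [set w | eprefix X k w = s])
  (HX_law : forall (k : nat) (s : k.-tuple (edge adj)),
      P [set w | eprefix X k w = s] = ((#|{: edge adj}|%:R ^+ k)^-1)%:E)
  (* F t v0 : F(t, v(0)), a function of the first t edges *)
  (F : forall t : nat, vec R n -> t.-tuple (edge adj) -> R)
  (* Finf v0 : F(v(0)), a random variable on the infinite edge sequences *)
  (Finf : vec R n -> Omega -> R)
  (C : R) (HC : 0 < C)
  (HFnonneg : forall (v0 : vec R n) (t : nat) (s : t.-tuple (edge adj)),
      norm1 v0 <= 1 -> (1 <= t)%N -> 0 <= F t v0 s)
  (* (i): E[F(t,v0) | v(t-1) = w] >= C ||w - vbar||_1, written as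
     E[F(t,v0) 1_{v(t-1)=w}] >= C ||w - vbar||_1 P(v(t-1)=w) *)
  (Hi : forall (v0 : vec R n) (t : nat) (w : vec R n),
      norm1 v0 <= 1 -> (1 <= t)%N ->
      Eseq (fun s : t.-tuple (edge adj) =>
              if traj v0 (take t.-1 s) == w then F t v0 s else 0)
      >= C * norm1 (w - vbar v0) *
         Eseq (fun s : t.-tuple (edge adj) =>
              if traj v0 (take t.-1 s) == w then 1 else 0))
  (* (ii): sum_{t=1}^k F(t,v0) --> F(v0) in L^1 *)
  (Hii_int : forall v0 : vec R n, norm1 v0 <= 1 ->
      P.-integrable setT (fun w => (Finf v0 w)%:E))
  (Hii_cvg : forall v0 : vec R n, norm1 v0 <= 1 ->
      (fun k : nat => (\int[P]_w
          (`| \sum_(1 <= t < k.+1) F t v0 (eprefix X t w) - Finf v0 w |)%:E)%E)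
        @ \oo --> 0%E)
  (Emax : R)
  (HEmax : (exists2 v0 : vec R n, norm1 v0 <= 1 &
              fine (\int[P]_w (Finf v0 w)%:E)%E = Emax) /\
           (forall v0 : vec R n, norm1 v0 <= 1 ->
              fine (\int[P]_w (Finf v0 w)%:E)%E <= Emax)) :
  (forall (eps : R) (v0 : vec R n), 0 < eps -> norm1 v0 <= 1 ->
     exists t : nat,
       t%:R <= 8 * fine (\int[P]_w (Finf v0 w)%:E)%E / (eps ^+ 2 * C) /\
       Edist adj v0 t <= eps)
  /\
  (forall eps : R, 0 < eps ->
     exists t : nat,
       t%:R <= 8 * Emax / (eps ^+ 2 * C) /\
       (forall v0 : vec R n, norm1 v0 = 1 -> Edist adj v0 t <= eps)).
Proof.
have Epos : (0 < #|{: edge adj}|)%N.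
  case: (pselect (exists w : Omega, True)) => [[w _]|nw].
    by apply/card_gt0P; exists (X 0%N w).
  exfalso.
  have e : [set: Omega] = set0.
    by apply/seteqP; split => // x _; apply: nw; exists x.
  have := probability_setT P; rewrite e measure0.
  by move/(congr1 fine) => /eqP; rewrite /= eq_sym oner_eq0.
have Dge0 (v0 : vec R n) (t : nat) : 0 <= Edist adj v0 t.
  by apply: Eseq_ge0 => s; apply: norm1_ge0.
have D0 (v0 : vec R n) : norm1 v0 <= 1 -> Edist adj v0 0 <= 2.
  move=> hv; rewrite Edist0; apply: le_trans (norm1B _ _ _ _) _.
  have := norm1_vbar _ _ v0 (ltnW Hn); lra.
have bound (v0 : vec R n) : norm1 v0 <= 1 -> forall k,
    (k.+1)%:R * C * Edist adj v0 k <= fine (\int[P]_w (Finf v0 w)%:E)%E.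
  move=> hv k.
  have B := @partial_le _ _ _ _ _ P X HX_meas HX_law F (Finf v0) v0
    (fun t s ht => HFnonneg v0 t s hv ht) (Hii_int v0 hv) (Hii_cvg v0 hv) k.+1.
  rewrite big_add1 /= in B.
  apply: le_trans B.
  have mono t j : Edist adj v0 (t + j) <= Edist adj v0 t.
    elim: j => [|j IH]; first by rewrite addn0.
    by rewrite addnS; exact: le_trans (Edist_mono _ _ _ Epos v0 (t + j)) IH.
  apply: (@le_trans _ _ (\sum_(0 <= t < k.+1) C * Edist adj v0 t)); last first.
    by apply: ler_sum => t _; apply: stepA => // w; apply: Hi.
  apply: (@le_trans _ _ (\sum_(0 <= t < k.+1) C * Edist adj v0 k)).
    by rewrite [X in _ <= X]sumr_const_nat subn0 -[X in _ <= X]mulr_natl mulrA.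
  rewrite big_nat_cond [X in _ <= X]big_nat_cond; apply: ler_sum => t /andP[/andP[_ ht] _].
  rewrite ler_wpM2l ?(ltW HC) //.
  by have := mono t (k - t)%N; rewrite subnKC // -ltnS.
have Mge0 (v0 : vec R n) : norm1 v0 <= 1 -> 0 <= fine (\int[P]_w (Finf v0 w)%:E)%E.
  move=> hv; apply: le_trans (bound v0 hv 0%N).
  by apply: mulr_ge0; [apply: mulr_ge0; [apply: ler0n | exact: ltW] | apply: Dge0].
split.
  move=> eps v0 he hv; exists (tchoice eps (fine (\int[P]_w (Finf v0 w)%:E)%E) C); split.
    by apply: tchoice1 => //; apply: Mge0.
  by apply: tchoice2 => //; [apply: Mge0 | apply: bound | apply: D0].
move=> eps he.
have [[v1 hv1 E1] HE] := HEmax.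
have E0 : 0 <= Emax by rewrite -E1; apply: Mge0.
exists (tchoice eps Emax C); split; first exact: tchoice1.
move=> v0 hv0; have hv : norm1 v0 <= 1 by rewrite hv0.
apply: tchoice2 => //; last exact: D0.
move=> k; exact: le_trans (bound v0 hv k) (HE v0 hv).
Qed.
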